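(* Let $q\in\mathbb{C}^\times$ and $t,k\in\mathbb{Z}_{>0}$. Then: (i) $p_t(q)(x_1,\dots,x_k)=p_t(q)(x_1,\dots,x_{k-1})+q^{-1}x_k^t+q^{-1}(q-q^{-1})\sum_{z=1}^{t-1}p_z(q)(x_1,\dots,x_{k-1})x_k^{t-z}$; (ii) $p_t(q)(x_1,\dots,x_k)=(-1)^{t-1}q^{-t}[t]e_t(x_1,\dots,x_k)+\sum_{z=1}^{t-1}(-1)^{t+z-1}p_z(q)(x_1,\dots,x_k)e_{t-z}(x_1,\dots,x_k)$; (iii) $p_{k+t}(q)(x_1,\dots,x_k)=\sum_{z=0}^{k-1}(-1)^{k+z-1}p_{t+z}(q)(x_1,\dots,x_k)e_{k-z}(x_1,\dots,x_k)$.
   Context: $[t]=(q^t-q^{-t})/(q-q^{-1})$ (interpreted as $t$ when $q^2=1$). For $t>0$ and $k\ge0$, $p_t(q)(x_1,\dots,x_k)=\sum_{\lambda\vdash t,\ \ell(\lambda)\le k}q^{-\ell(\lambda)}(q-q^{-1})^{\ell(\lambda)-1}m_\lambda(x_1,\dots,x_k)$, where $\lambda$ runs over partitions of $t$ with at most $k$ nonzero parts and $m_\lambda$ is the monomial symmetric polynomial (so $p_t(q)$ of zero variables is $0$). $e_t$ denotes the elementary symmetric polynomial, $e_0=1$, $e_t=0$ for $t>k$. *)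

(* Defs.v *)
From HB Require Import structures.
From mathcomp Require Import all_boot all_order all_algebra.
From mathcomp Require Export mpoly.
Set Implicit Arguments. Unset Strict Implicit. Unset Printing Implicit Defensive.
Import Order.TTheory GRing.Theory Num.Theory.
Local Open Scope ring_scope.

Definition mseq (n : nat) (m : 'X_{1..n}) : seq nat := [seq m i | i <- enum 'I_n].

(* A partition lambda of t with at most n nonzero parts is represented by the
   nonincreasing exponent vector (lambda_1, ..., lambda_n) (padded with zeros). *)
Definition is_partition (n t : nat) (l : 'X_{1..n}) : bool :=
  sorted geq (mseq l) && (mdeg l == t).

Definition plength (n : nat) (l : 'X_{1..n}) : nat := count (fun a => 0 < a)%N (mseq l).

Definition msymm (R : ringType) (n : nat) (l : 'X_{1..n}) : {mpoly R[n]} :=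
  \sum_(a : 'X_{1..n < (mdeg l).+1} | perm_eq (mseq a) (mseq l)) 'X_[bmnm a].

Definition pq (R : fieldType) (q : R) (t n : nat) : {mpoly R[n]} :=
  \sum_(l : 'X_{1..n < t.+1} | is_partition t (bmnm l))
     ((q^-1) ^+ plength (bmnm l) * (q - q^-1) ^+ (plength (bmnm l)).-1) *: msymm R (bmnm l).

(* quantum integer [t] = q^{t-1} + q^{t-3} + ... + q^{1-t}
   (= (q^t - q^{-t})/(q - q^{-1}) when q^2 <> 1) *)
Definition qint (R : fieldType) (q : R) (t : nat) : R :=
  \sum_(j < t) q ^ (t%:Z - 1 - 2 * (j : nat)%:Z).

(* Main.v *)
Require Import Defs.
From HB Require Import structures.
From HB Require Import structures.
From mathcomp Require Import all_boot all_order all_algebra.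
From mathcomp Require Import mpoly.
From mathcomp Require Import ring.
Set Implicit Arguments. Unset Strict Implicit. Unset Printing Implicit Defensive.
Import Order.TTheory GRing.Theory Num.Theory.
Local Open Scope ring_scope.

Lemma mdeg_mseq n (m : 'X_{1..n}) : mdeg m = sumn (mseq m).
Proof. by rewrite mdegE /mseq sumnE big_map big_enum. Qed.

Lemma mcoeff_msymm (R : ringType) n (l m : 'X_{1..n}) :
  (msymm R l)@_m = (perm_eq (mseq m) (mseq l))%:R.
Proof.
rewrite /msymm raddf_sum /=.
under eq_bigr do rewrite mcoeffX.
case: (boolP (perm_eq _ _)) => hp.
  have hlt : (mdeg m < (mdeg l).+1)%N.
    by rewrite ltnS !mdeg_mseq (perm_sumn hp).
  rewrite (bigD1 (BMultinom hlt)) //= eqxx big1 ?addr0 // => a /andP[_ ha].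
  case: eqP => // e; case/eqP: ha; apply/val_inj => /=; exact: e.
rewrite big1 // => a ha; case: eqP => // e; move: hp; by rewrite -e ha.
Qed.

Lemma size_mseq n (a : 'X_{1..n}) : size (mseq a) = n.
Proof. by rewrite /mseq size_map size_enum_ord. Qed.

Lemma nth_mseq n (a : 'X_{1..n}) (i : 'I_n) : nth 0%N (mseq a) i = a i.
Proof. by rewrite /mseq (nth_map i) ?size_enum_ord // nth_ord_enum. Qed.

Lemma mseq_inj n : injective (@mseq n).
Proof. by move=> a b e; apply/mnmP => i; rewrite -!nth_mseq e. Qed.

Lemma mseq_mk n (s : seq nat) : size s = n ->
  mseq [multinom nth 0%N s i | i < n] = s.
Proof.
move=> hs; apply: (@eq_from_nth _ 0%N); first by rewrite size_mseq.
move=> j; rewrite size_mseq => hj.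
by rewrite (nth_mseq _ (Ordinal hj)) mnmE.
Qed.

Definition wt (C : fieldType) (q : C) (s : nat) := q^-1 ^+ s * (q - q^-1) ^+ s.-1.

Lemma plength_perm n (a b : 'X_{1..n}) : perm_eq (mseq a) (mseq b) -> plength a = plength b.
Proof. by move=> /permP h; rewrite /plength h. Qed.

Lemma mdeg_perm n (a b : 'X_{1..n}) : perm_eq (mseq a) (mseq b) -> mdeg a = mdeg b.
Proof. by move=> h; rewrite !mdeg_mseq (perm_sumn h). Qed.

Lemma pq_coef (C : fieldType) (q : C) t n (m : 'X_{1..n}) :
  (pq q t n)@_m = (mdeg m == t)%:R * wt q (plength m).
Proof.
rewrite /pq raddf_sum /=.
under eq_bigr => l hl.
  rewrite mcoeffZ mcoeff_msymm.
  have -> : (q^-1 ^+ plength (bmnm l) * (q - q^-1) ^+ (plength (bmnm l)).-1) *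
    (perm_eq (mseq m) (mseq (bmnm l)))%:R =
    (if perm_eq (mseq m) (mseq (bmnm l)) then wt q (plength m) else 0).
    case: ifP => hp; last by rewrite mulr0.
    by rewrite mulr1 /wt (plength_perm hp).
  over.
rewrite -big_mkcondr /=.
case: (boolP (mdeg m == t)) => hd; last first.
  rewrite big_pred0 ?mul0r // => l; apply/negP => /andP[/andP[_ /eqP hl] hp].
  by move: hd; rewrite (mdeg_perm hp) hl eqxx.
pose s := sort geq (mseq m).
have hs : size s = n by rewrite size_sort size_mseq.
pose lm : 'X_{1..n} := [multinom nth 0%N s i | i < n].
have hlm : mseq lm = s by rewrite mseq_mk.
have hlt : (mdeg lm < t.+1)%N.
  by rewrite mdeg_mseq hlm (perm_sumn (permEl (perm_sort _ _))) -mdeg_mseq (eqP hd).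
rewrite (big_pred1 (BMultinom hlt)) ?mul1r ?sumr_const ?card_ord //.
move=> l /=; apply/idP/idP.
  move=> /andP[/andP[hsort _] hp]; apply/eqP/val_inj => /=.
  apply: mseq_inj; rewrite hlm.
  apply: (sorted_eq (leT := geq)) => //.
  - by move=> x y z h1 h2; apply: leq_trans h2 h1.
  - by move=> x y /andP[h1 h2]; apply/eqP; rewrite eqn_leq; apply/andP; split.
  - by apply: sort_sorted => x y; apply: leq_total.
  by rewrite perm_sym (perm_trans (permEl (perm_sort _ _))) // perm_sym.
move=> /eqP -> /=; rewrite /is_partition hlm.
rewrite (sort_sorted (fun x y => leq_total y x)) /=.
rewrite mdeg_mseq hlm (perm_sumn (permEl (perm_sort _ _))) -mdeg_mseq hd /=.
by rewrite perm_sym; apply: permEl; apply: perm_sort.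
Qed.

Definition mres n (m : 'X_{1..n.+1}) : 'X_{1..n} :=
  [multinom m (widen_ord (leqnSn n) i) | i < n].

Lemma mseq_split n (m : 'X_{1..n.+1}) : mseq m = rcons (mseq (mres m)) (m ord_max).
Proof.
rewrite {1}/mseq enum_ordSr map_rcons -map_comp; congr rcons.
by apply: eq_map => i /=; rewrite mnmE.
Qed.

Lemma mdeg_split n (m : 'X_{1..n.+1}) : mdeg m = (mdeg (mres m) + m ord_max)%N.
Proof. by rewrite !mdeg_mseq mseq_split -cats1 sumn_cat /= addn0. Qed.

Lemma plength_split n (m : 'X_{1..n.+1}) :
  plength m = (plength (mres m) + (0 < m ord_max))%N.
Proof. by rewrite /plength mseq_split -cats1 count_cat /= addn0. Qed.

Lemma mdecomp n (m : 'X_{1..n.+1}) :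
  m = (mnmwiden (mres m) + U_(ord_max) *+ (m ord_max))%MM.
Proof.
apply/mnmP => i; rewrite mnmDE mulmnE mnm1E.
case: (unliftP ord_max i) => [j ->|->].
  have -> : lift ord_max j = widen_ord (leqnSn n) j.
    by apply: val_inj; rewrite /= /bump leqNgt ltn_ord.
  rewrite mnmwiden_widen mnmE.
  have -> : (ord_max == widen_ord (leqnSn n) j) = false.
    by apply/negbTE; rewrite -val_eqE /= neq_ltn ltn_ord orbT.
  by rewrite mul0n addn0.
by rewrite mnmwiden_ordmax eqxx mul1n.
Qed.

Lemma coef_wX (R : comRingType) n (p : {mpoly R[n]}) j (m : 'X_{1..n.+1}) :
  (mwiden p * 'X_ord_max ^+ j)@_m = (m ord_max == j)%:R * p@_(mres m).
Proof.
rewrite mpolyXn.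
case: (boolP (m ord_max == j)) => h.
  by rewrite {1}(mdecomp m) (eqP h) addmC mcoeffMX mwiden_mnmwiden mul1r.
rewrite mul0r (mwidenE (k := msize p)) // mulr_suml raddf_sum big1 // => b _.
rewrite -scalerAl -mpolyXD /= mcoeffZ mcoeffX.
case: eqP => [e|]; last by rewrite mulr0.
by move: h; rewrite -e mnmDE mnmwiden_ordmax mulmnE mnm1E eqxx mul1n eqxx.
Qed.

Lemma coef_w (R : comRingType) n (p : {mpoly R[n]}) (m : 'X_{1..n.+1}) :
  (mwiden p)@_m = (m ord_max == 0%N)%:R * p@_(mres m).
Proof. by rewrite -coef_wX expr0 mulr1. Qed.

Lemma coef_X (R : comRingType) n j (m : 'X_{1..n.+1}) :
  ('X_ord_max ^+ j : {mpoly R[n.+1]})@_m = (m ord_max == j)%:R * (mres m == 0%MM)%:R.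
Proof.
have -> : ('X_ord_max ^+ j : {mpoly R[n.+1]}) = mwiden (1 : {mpoly R[n]}) * 'X_ord_max ^+ j.
  by rewrite mwiden1 mul1r.
by rewrite coef_wX mcoeff1.
Qed.

Lemma sum_ind (R : ringType) (F : nat -> R) m n k :
  \sum_(m <= z < n) ((z == k)%:R * F z) = ((m <= k)%N && (k < n)%N)%:R * F k.
Proof.
elim: n => [|n IH]; first by rewrite big_geq // ltn0 andbF mul0r.
case: (leqP m n) => h; last first.
  rewrite big_geq //; case: (leqP m k) => hk //=; last by rewrite mul0r.
  by rewrite ltnNge (leq_trans h hk) mul0r.
rewrite big_nat_recr //= IH.
case: (eqVneq n k) => [e|hnk].
  by rewrite -e ltnn andbF ltnSn h mul0r add0r mul1r.
by rewrite /= mul0r addr0 ltnS (leq_eqVlt k) (eq_sym k) (negbTE hnk).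
Qed.

Lemma sumn_count (s : seq nat) : (0 < sumn s)%N -> (0 < count (fun a => 0 < a)%N s)%N.
Proof. elim: s => //= x s IH; case: x => //= h; exact: IH. Qed.

Lemma plength_pos n (m : 'X_{1..n}) : (0 < mdeg m)%N -> (0 < plength m)%N.
Proof. by rewrite mdeg_mseq; apply: sumn_count. Qed.

Lemma plength0 n (m : 'X_{1..n}) : mdeg m = 0%N -> plength m = 0%N.
Proof.
move=> /eqP; rewrite mdeg_eq0 => /eqP ->; rewrite /plength /mseq.
by elim: (enum 'I_n) => //= i s IH; rewrite mnm0E.
Qed.

Lemma eq_sub_swap (a t z : nat) : (z < t)%N -> (a < t)%N -> (a == t - z)%N = (z == t - a)%N.
Proof. by move=> h1 h2; apply/eqP/eqP => ->; rewrite subKn // ltnW. Qed.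

Lemma part1 (C : fieldType) (q : C) t n : (0 < t)%N ->
  pq q t n.+1 =
        mwiden (pq q t n) + q^-1 *: 'X_ord_max ^+ t
        + (q^-1 * (q - q^-1)) *: \sum_(1 <= z < t) mwiden (pq q z n) * 'X_ord_max ^+ (t - z).
Proof.
move=> ht; apply/mpolyP => m.
rewrite pq_coef !mcoeffD !mcoeffZ coef_w coef_X pq_coef mdeg_split plength_split.
set a := m ord_max; set b := mres m.
have -> : (\sum_(1 <= z < t) mwiden (pq q z n) * 'X_ord_max ^+ (t - z))@_m =
   (a < t)%:R * \sum_(1 <= z < t) ((z == (t - a)%N)%:R * ((mdeg b == z)%:R * wt q (plength b))).
  rewrite raddf_sum mulr_sumr; apply: eq_big_nat => z /andP[hz1 hzt].
rewrite /=.   rewrite coef_wX pq_coef -/a -/b mulrA; congr (_ * _).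
  case: (ltnP a t) => hat.
    by rewrite mul1r eq_sub_swap.
  rewrite /= mul0r; case: eqP => // e; by move: hat; rewrite e leqNgt ltn_subrL hz1 (leq_ltn_trans (leq0n z) hzt).
rewrite sum_ind.
rewrite -mdeg_eq0.
have hs0 : mdeg b = 0%N -> plength b = 0%N by apply: plength0.
have hsp : (0 < mdeg b)%N -> (0 < plength b)%N by apply: plength_pos.
move: hs0 hsp; set d := mdeg b; set s := plength b => hs0 hsp.
have [->|apos] := posnP a.
  rewrite /= !addn0 (eq_sym 0%N) (gtn_eqF ht) subn0 ltnn andbF /= ?(mulr1n, mulr0n).
  by rewrite !(mul0r, mulr0, addr0, mul1r).
rewrite /= ?(mulr1n, mulr0n) mul0r add0r addn1.
case: (ltngtP a t) => [alt|agt|aeq].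
- rewrite mul0r mulr0 add0r subn_gt0 alt /= mul1r ltn_subrL apos ht /= mul1r.
  case: (eqVneq d (t - a)%N) => hd.
    have -> : (d + a == t)%N by rewrite hd subnK // ltnW.
    have : (0 < s)%N by apply: hsp; rewrite hd subn_gt0.
    clear hs0; case: s hsp => // s' _ _; rewrite /wt /= !mul1r.
    by rewrite !exprS; ring.
  have -> : (d + a == t)%N = false by apply/negbTE; apply: contra hd => /eqP <-; rewrite addnK.
  by rewrite !(mul0r, mulr0).
- have -> : (d + a == t)%N = false by apply/negbTE; rewrite neq_ltn (ltn_addl _ agt) orbT.
  rewrite /= ?mulr0n.
  by rewrite !(mul0r, mulr0, addr0).
- rewrite aeq /= ?(mulr1n, mulr0n) !(mul0r, mulr0, addr0, mul1r).
  rewrite -{2}(add0n t) eqn_add2r.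
  case: (eqVneq d 0%N) => hd; last by rewrite mul0r mulr0.
  by rewrite hs0 // /wt /= !(mul1r, mulr1) expr1.
Qed.

Definition gq (C : fieldType) (q : C) (i : nat) := \sum_(j < i) q^-1 ^+ (2 * j + 1).

Lemma qint_gq (C : fieldType) (q : C) t : q != 0 -> q ^- t * qint q t = gq q t.
Proof.
move=> hq; rewrite /qint /gq mulr_sumr; apply: eq_bigr => j _.
rewrite exprVn !exprnN -expfzDr //; congr (_ ^ _); rewrite PoszD PoszM; ring.
Qed.

Lemma gqS (C : fieldType) (q : C) i : gq q i.+1 = q^-1 + q^-1 ^+ 2 * gq q i.
Proof.
rewrite /gq big_ord_recl /= expr1; congr (_ + _).
rewrite mulr_sumr; apply: eq_bigr => j _; rewrite -exprD /=; congr (_ ^+ _); by rewrite /bump /= add1n mulnS addnA.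
Qed.

Lemma gq0 (C : fieldType) (q : C) : gq q 0 = 0.
Proof. by rewrite /gq big_ord0. Qed.

Lemma sign_addsub (R : ringType) k z : (z <= k)%N -> (-1) ^+ (k + z) = (-1) ^+ (k - z) :> R.
Proof.
move=> h; rewrite -signr_odd -[RHS]signr_odd oddD oddB //.
Qed.

Lemma sign_pred (R : ringType) k z : (z <= k)%N -> (0 < k + z)%N ->
  (-1) ^+ (k + z).-1 = - (-1) ^+ (k - z) :> R.
Proof.
move=> h hp; rewrite -sign_addsub // -(prednK hp) exprS mulN1r opprK //.
Qed.

Section Series.
Variable (C : fieldType) (q : C).

Definition eqm (R : ringType) N (a b : {poly R}) := forall i, (i <= N)%N -> a`_i = b`_i.

Lemma eqm_trans (R : ringType) N (a b c : {poly R}) : eqm N a b -> eqm N b c -> eqm N a c.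
Proof. by move=> h1 h2 i hi; rewrite h1 ?h2. Qed.

Lemma eqm_eq (R : ringType) N (a b : {poly R}) : a = b -> eqm N a b.
Proof. by move=> ->. Qed.

Lemma eqm_add (R : ringType) N (a b c d : {poly R}) : eqm N a b -> eqm N c d -> eqm N (a + c) (b + d).
Proof. by move=> h1 h2 i hi; rewrite !coefD h1 ?h2. Qed.

Lemma eqm_mul (R : ringType) N (a b c d : {poly R}) : eqm N a b -> eqm N c d -> eqm N (a * c) (b * d).
Proof.
move=> h1 h2 i hi; rewrite !coefM; apply: eq_bigr => j _.
rewrite h1 ?h2 //; first exact: leq_trans (leq_subr _ _) hi.
exact: leq_trans (leq_ord j) hi.
Qed.

Lemma eqm_widen k N (a b : {poly {mpoly C[k]}}) : eqm N a b -> eqm N (mpwiden a) (mpwiden b).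
Proof. by move=> h i hi; rewrite /mpwiden !coef_map /= h. Qed.

Definition Pser k N : {poly {mpoly C[k]}} := \poly_(i < N.+1) (if i == 0%N then 0 else pq q i k).
Definition Eser k N : {poly {mpoly C[k]}} := \poly_(i < N.+1) ((-1) ^+ i *: mesym k C i).
Definition Dser k N : {poly {mpoly C[k]}} := \poly_(i < N.+1) ((- gq q i * (-1) ^+ i) *: mesym k C i).
Definition Yser k N : {poly {mpoly C[k.+1]}} :=
  \poly_(i < N.+1) (if i == 0%N then 0 else q^-1 *: 'X_ord_max ^+ i).

Lemma base N : eqm N (Pser 0 N * Eser 0 N) (Dser 0 N).
Proof.
have -> : Pser 0 N = 0.
  apply/polyP => i; rewrite coef_poly coef0; case: (i < N.+1)%N => //.
  case: eqP => // /eqP hi; apply/mpolyP => m; rewrite pq_coef mcoeff0.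
  have -> : mdeg m = 0%N by rewrite mdegE big_ord0.
  by rewrite eq_sym (negbTE hi) mul0r.
move=> i hi; rewrite mul0r coef0 coef_poly ltnS hi.
case: i hi => [|i] hi; first by rewrite gq0 oppr0 mul0r scale0r.
by rewrite mesym_geqnE // scaler0.
Qed.

Lemma sum_shift (R : zmodType) z (F : nat -> R) :
  \sum_(j < z.+2) F j = F 0%N + \sum_(1 <= w < z.+1) F w + F z.+1.
Proof. by rewrite -(big_mkord xpredT) big_ltn // big_nat_recr //= addrA. Qed.

Lemma R1 n N : eqm N (Pser n.+1 N)
  (mpwiden (Pser n N) + (1 + ((q - q^-1)%:MP)%:P * mpwiden (Pser n N)) * Yser n N).
Proof.
move=> i hi; rewrite mulrDl mul1r !coefD -mulrA coefCM coefM coef_poly ltnS hi.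
rewrite /mpwiden coef_map /= /Yser coef_poly ltnS hi /Pser coef_poly ltnS hi.
case: i hi => [|z] hi.
  by rewrite /= big_ord1 coef_map /= coef_poly /= mwiden0 !mul0r mulr0 !add0r.
rewrite /= part1 // addrA; congr (_ + _).
rewrite (@sum_shift _ z (fun j => _`_j * _`_(z.+1 - j))) coef_map /= coef_poly /= mwiden0 mul0r add0r.
rewrite subnn.
have -> : (\poly_(i < N.+1) (if i == 0%N then 0 else q^-1 *: 'X_ord_max ^+ i) : {poly {mpoly C[n.+1]}})`_0 = 0.
  by rewrite coef_poly.
rewrite mulr0 addr0.
rewrite mul_mpolyC scaler_sumr scaler_sumr; apply: eq_big_nat => j /andP[hj1 hj2].
rewrite coef_map /= coef_poly ltnS (leq_trans _ hi) //; last exact: ltnW.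
rewrite (negbTE (lt0n_neq0 hj1)) coef_poly subn_eq0.
have -> : (z.+1 - j < N.+1)%N by rewrite ltnS (leq_trans _ (ltnW hi)) // leq_subLR -[z.+1]add1n leq_add2r.
have -> : (z < j)%N = false by rewrite ltnNge -ltnS hj2.
by rewrite -scalerAr scalerA mulrC.
Qed.

Lemma R2 n N : eqm N (Eser n.+1 N) (mpwiden (Eser n N) * (1 - ('X_ord_max)%:P * 'X)).
Proof.
move=> i hi; rewrite mulrBr mulr1 coefB mulrA coefMX coefMC /mpwiden !coef_map /= !coef_poly ltnS hi.
case: i hi => [|z] hi.
  by rewrite /= !expr0 !scale1r !mesym0E mwiden1 subr0.
by rewrite /= ltnS (ltnW hi) mesymSS !mwidenZ scalerDr exprS mulN1r !scaleNr -scalerAl.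
Qed.

Lemma R3 n N : eqm N (Yser n N * (1 - ('X_ord_max)%:P * 'X)) ((q^-1 *: 'X_ord_max)%:P * 'X).
Proof.
move=> i hi; rewrite mulrBr mulr1 coefB mulrA !coefMX coefMC coefC /Yser !coef_poly ltnS hi.
case: i hi => [|z] hi; first by rewrite /= subr0.
rewrite /= ltnS (ltnW hi).
case: z hi => [|z] hi; first by rewrite /= mul0r subr0 expr1.
by rewrite /= -scalerAl -exprSr subrr.
Qed.

Lemma coef_lin (R : comRingType) (A E : {poly R}) (a b c : R) i :
  (A * (1 - a%:P * 'X) + (E + c%:P * A) * (b%:P * 'X))`_i =
  A`_i - (if i == 0%N then 0 else A`_i.-1 * a) +
  (if i == 0%N then 0 else (E`_i.-1 + c * A`_i.-1) * b).
Proof. by rewrite mulrBr mulr1 !mulrA coefD coefB !coefMX !coefMC coefD coefCM. Qed.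

Lemma R4 n N : q != 0 -> eqm N
  (mpwiden (Dser n N) * (1 - ('X_ord_max)%:P * 'X) +
   (mpwiden (Eser n N) + ((q - q^-1)%:MP)%:P * mpwiden (Dser n N)) * ((q^-1 *: 'X_ord_max)%:P * 'X))
  (Dser n.+1 N).
Proof.
move=> hq i hi.
rewrite coef_lin /mpwiden !coef_map /= !coef_poly ltnS hi.
case: i hi => [|z] hi.
  by rewrite /= gq0 oppr0 mul0r !scale0r mwiden0 subr0 addr0.
rewrite /= ltnS (ltnW hi) mesymSS gqS !mwidenZ -!mul_mpolyC.
apply/eqP; rewrite -subr_eq0; apply/eqP.
transitivity ((1 - q * q^-1)%:MP * (((-1) ^+ z)%:MP * mwiden (mesym n C z) * 'X_ord_max * (gq q z)%:MP)).
  rewrite !rmorphM /= !rmorphB /= !rmorphN /= !rmorphXn /= rmorph1.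
  have e1 : (q^-1 + q^-1 ^+ 2 * gq q z)%:MP_[n.+1] = q^-1%:MP + q^-1%:MP ^+ 2 * (gq q z)%:MP.
    by rewrite rmorphD rmorphM rmorphXn.
  have e2 : (q / q)%:MP_[n.+1] = q%:MP * q^-1%:MP by rewrite rmorphM.
  rewrite e1 e2.
  rewrite rmorphN rmorph1 !exprS.
  move: ((-1) ^+ z : {mpoly C[n.+1]}) => S.
  move: (q^-1%:MP_[n.+1]) (q%:MP_[n.+1]) ((gq q z)%:MP_[n.+1]).
  move: (mwiden (mesym n C z.+1)) (mwiden (mesym n C z)) ('X_ord_max : {mpoly C[n.+1]}).
  move=> A B Y U Q G.
  ring.
by rewrite mulfV // subrr rmorph0 mul0r.
Qed.

Lemma series_id k N : q != 0 -> eqm N (Pser k N * Eser k N) (Dser k N).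
Proof.
move=> hq; elim: k => [|n IH]; first exact: base.
have W : eqm N (mpwiden (Pser n N) * mpwiden (Eser n N)) (mpwiden (Dser n N)).
  by rewrite -rmorphM; apply: eqm_widen.
apply: eqm_trans (eqm_mul (@R1 n N) (@R2 n N)) _.
have e : forall (WP WE Y c y X : {poly {mpoly C[n.+1]}}),
   (WP + (1 + c * WP) * Y) * (WE * (1 - y * X)) =
   WP * WE * (1 - y * X) + (WE + c * (WP * WE)) * (Y * (1 - y * X)).
  by move=> *; ring.
rewrite e.
apply: eqm_trans (@R4 n N hq).
apply: eqm_add; first by apply: eqm_mul => //; apply: eqm_eq.
apply: eqm_mul; last exact: (@R3 n N).
apply: eqm_add; first exact: eqm_eq.
by apply: eqm_mul => //; apply: eqm_eq.
Qed.

End Series.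

Lemma Pser_coef (C : fieldType) (q : C) k N j : (j <= N)%N ->
  (Pser q k N)`_j = if j == 0%N then 0 else pq q j k.
Proof. by move=> h; rewrite coef_poly ltnS h. Qed.

Lemma Eser_coef (C : fieldType) k N j : (j <= N)%N ->
  (Eser C k N)`_j = (-1) ^+ j *: mesym k C j.
Proof. by move=> h; rewrite coef_poly ltnS h. Qed.

Lemma Dser_coef (C : fieldType) (q : C) k N j : (j <= N)%N ->
  (Dser q k N)`_j = (- gq q j * (-1) ^+ j) *: mesym k C j.
Proof. by move=> h; rewrite coef_poly ltnS h. Qed.

Lemma Sid (C : fieldType) (q : C) k t : q != 0 ->
  \sum_(j < t.+1) (Pser q k t)`_j * (Eser C k t)`_(t - j) = (Dser q k t)`_t.
Proof. by move=> hq; rewrite -coefM; exact: (@series_id C q k t hq t (leqnn t)). Qed.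

Lemma part2 (C : fieldType) (q : C) (hq : q != 0) t k : (0 < t)%N ->
  pq q t k =
        ((-1) ^+ t.-1 * q ^- t * qint q t) *: mesym k C t
        + \sum_(1 <= z < t) (-1) ^+ (t + z).-1 *: (pq q z k * mesym k C (t - z)).
Proof.
case: t => // t _.
have S := Sid k t.+1 hq.
move: S; rewrite (@sum_shift _ t (fun j => (Pser q k t.+1)`_j * (Eser C k t.+1)`_(t.+1 - j))).
rewrite Pser_coef // mul0r add0r Pser_coef // subnn Eser_coef // expr0 scale1r mesym0E mulr1.
rewrite Dser_coef // => S.
have -> : pq q t.+1 k = (- gq q t.+1 * (-1) ^+ t.+1) *: mesym k C t.+1 -
    \sum_(1 <= w < t.+1) (Pser q k t.+1)`_w * (Eser C k t.+1)`_(t.+1 - w).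
  by rewrite -S addrC addKr.
congr (_ + _).
  congr (_ *: _); rewrite -mulrA qint_gq // exprS mulN1r mulrN mulNr opprK mulrC //.
rewrite -sumrN; apply: eq_big_nat => w /andP[hw1 hw2].
rewrite Pser_coef ?(ltnW hw2) // (negbTE (lt0n_neq0 hw1)) Eser_coef ?leq_subr //.
rewrite sign_pred ?(ltnW hw2) // scaleNr scalerAr //.
Qed.

Lemma sum_shiftn (R : zmodType) (F : nat -> R) t K :
  \sum_(t <= j < t + K) F j = \sum_(0 <= z < K) F (t + z)%N.
Proof.
elim: K => [|K IH]; first by rewrite addn0 !big_geq.
by rewrite addnS !big_nat_recr ?leq_addr //= IH.
Qed.

Lemma part3 (C : fieldType) (q : C) (hq : q != 0) n t : (0 < t)%N ->
  pq q (n.+1 + t) n.+1 =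
        \sum_(0 <= z < n.+1) (-1) ^+ (n.+1 + z).-1 *: (pq q (t + z) n.+1 * mesym n.+1 C (n.+1 - z)).
Proof.
move=> ht; rewrite (addnC n.+1 t).
have S := Sid n.+1 (t + n.+1) hq.
have hlt : (n.+1 < t + n.+1)%N by rewrite -{1}(add0n n.+1) ltn_add2r.
rewrite Dser_coef // mesym_geqnE // scaler0 in S.
move: S; rewrite -(big_mkord xpredT (fun j => (Pser q n.+1 (t + n.+1))`_j * (Eser C n.+1 (t + n.+1))`_(t + n.+1 - j))).
rewrite (@big_cat_nat _ _ _ t) /=; last by rewrite ltnW // ltnS leq_addr.
rewrite big_nat_cond big1 ?add0r; last first.
  move=> j /andP[/andP[_ hj] _].
  rewrite Eser_coef ?leq_subr // mesym_geqnE ?scaler0 ?mulr0 //.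
  by rewrite ltn_subRL ltn_add2r.
rewrite big_nat_recr /= ?leq_addr // sum_shiftn subnn Eser_coef // expr0 scale1r mesym0E mulr1.
rewrite Pser_coef // addn_eq0 (negbTE (lt0n_neq0 ht)) /=.
move/eqP; rewrite addrC addr_eq0 => /eqP ->.
rewrite -sumrN; apply: eq_big_nat => z /andP[_ hz].
rewrite Pser_coef ?leq_add2l ?(ltnW hz) // addn_eq0 (negbTE (lt0n_neq0 ht)) /=.
rewrite Eser_coef ?leq_subr // subnDl -[(n + z)%N]/((n.+1 + z).-1) sign_pred ?(ltnW hz) // scaleNr scalerAr //.
by [].
Qed.

Unset Implicit Arguments.

Theorem mainTheorem16 (C : numClosedFieldType) (q : C) (hq : q != 0) (t n : nat) (ht : (0 < t)%N) :
  [/\ pq q t n.+1 =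
        mwiden (pq q t n) + q^-1 *: 'X_ord_max ^+ t
        + (q^-1 * (q - q^-1)) *: \sum_(1 <= z < t) mwiden (pq q z n) * 'X_ord_max ^+ (t - z),
      pq q t n.+1 =
        ((-1) ^+ t.-1 * q ^- t * qint q t) *: mesym n.+1 C t
        + \sum_(1 <= z < t) (-1) ^+ (t + z).-1 *: (pq q z n.+1 * mesym n.+1 C (t - z))
    & pq q (n.+1 + t) n.+1 =
        \sum_(0 <= z < n.+1) (-1) ^+ (n.+1 + z).-1 *: (pq q (t + z) n.+1 * mesym n.+1 C (n.+1 - z))].
Proof.
split; [exact: part1 | exact: part2 | exact: part3].
Qed.
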